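(* Let $1\to N\to G\to Q\to1$ be a short exact sequence of groups. (1) If $G$ involves all finite groups, then $N$ or $Q$ involves all finite groups. (2) If $N$ is finitely generated and involves all finite groups, then $G$ involves all finite groups.
   Context: A group $G$ involves all finite groups if for every finite group $F$ there is a finite index subgroup $G_0<G$ and an epimorphism $G_0\to F$. *)

(* Defs.v *)
From Stdlib Require Lists.List.
From mathcomp Require Import all_boot all_fingroup.
Set Implicit Arguments. Unset Strict Implicit. Unset Printing Implicit Defensive.

Record AbsGroup := MkGroup {
  carrier :> Type;
  gmul : carrier -> carrier -> carrier;
  gone : carrier;
  ginv : carrier -> carrier;
  gmulA : forall x y z, gmul x (gmul y z) = gmul (gmul x y) z;
  gmul1g : forall x, gmul gone x = x;
  gmulg1 : forall x, gmul x gone = x;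
  gmulVg : forall x, gmul (ginv x) x = gone;
  gmulgV : forall x, gmul x (ginv x) = gone
}.

Definition is_subgroup (G : AbsGroup) (H : G -> Prop) : Prop :=
  H (@gone G) /\ (forall x y, H x -> H y -> H (@gmul G x y)) /\
  (forall x, H x -> H (@ginv G x)).

Definition finite_index (G : AbsGroup) (H : G -> Prop) : Prop :=
  exists s : list G, forall g : G,
    exists t h, Stdlib.Lists.List.In t s /\ H h /\ g = @gmul G t h.

Definition is_hom (A B : AbsGroup) (f : A -> B) : Prop :=
  forall x y, f (@gmul A x y) = @gmul B (f x) (f y).

Definition epi_onto (G : AbsGroup) (H : G -> Prop) (gT : finGroupType)
    (f : G -> gT) : Prop :=
  (forall x y, H x -> H y -> f (@gmul G x y) = (f x * f y)%g) /\
  (forall z : gT, exists x, H x /\ f x = z).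

Definition involves_all_finite (G : AbsGroup) : Prop :=
  forall gT : finGroupType, exists H : G -> Prop,
    is_subgroup H /\ finite_index H /\ exists f : G -> gT, epi_onto H f.

Definition short_exact (N G Q : AbsGroup) (i : N -> G) (p : G -> Q) : Prop :=
  is_hom i /\ is_hom p /\
  (forall x y, i x = i y -> x = y) /\
  (forall q : Q, exists g, p g = q) /\
  (forall g : G, p g = @gone Q <-> exists n, i n = g).

Definition finitely_generated (G : AbsGroup) : Prop :=
  exists s : list G, forall H : G -> Prop,
    is_subgroup H -> (forall x, Stdlib.Lists.List.In x s -> H x) -> forall g, H g.

(* Main.v *)
Require Import Defs.
From Stdlib Require Import ClassicalEpsilon.
From mathcomp Require Import all_boot all_fingroup all_solvable.
From mathcomp Require Import zify.
Import GroupScope.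
Set Implicit Arguments. Unset Strict Implicit. Unset Printing Implicit Defensive.


Definition asb (P : Prop) : bool := if excluded_middle_informative P then true else false.
Lemma asbP (P : Prop) : reflect P (asb P).
Proof. rewrite /asb; case: excluded_middle_informative => h; constructor => //. Qed.

Lemma inP (T : eqType) (x : T) (s : seq T) : List.In x s <-> x \in s.
Proof.
elim: s => [|y s IH] /=; first by split.
rewrite in_cons; split.
  by case=> [->|/IH ->]; rewrite ?eqxx ?orbT.
by case/orP => [/eqP ->|/IH]; [left|right].
Qed.

Section AG.
Variable G : AbsGroup.
Local Notation "x ** y" := (@gmul G x y) (at level 40, left associativity).
Local Notation one := (@gone G).
Local Notation inv := (@ginv G).

Lemma gKg (x y : G) : inv x ** (x ** y) = y.
Proof. by rewrite gmulA gmulVg gmul1g. Qed.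
Lemma gVKg (x y : G) : x ** (inv x ** y) = y.
Proof. by rewrite gmulA gmulgV gmul1g. Qed.
Lemma ggK (x y : G) : x ** y ** inv y = x.
Proof. by rewrite -gmulA gmulgV gmulg1. Qed.
Lemma ggVK (x y : G) : x ** inv y ** y = x.
Proof. by rewrite -gmulA gmulVg gmulg1. Qed.
Lemma gcancl (x y z : G) : x ** y = x ** z -> y = z.
Proof. by move=> h; rewrite -(gKg x y) h gKg. Qed.
Lemma gcancr (x y z : G) : y ** x = z ** x -> y = z.
Proof. by move=> h; rewrite -(ggK y x) h ggK. Qed.
Lemma ginv_uniq (x y : G) : x ** y = one -> inv x = y.
Proof. by move=> h; apply: (@gcancl x); rewrite gmulgV h. Qed.
Lemma ginvK (x : G) : inv (inv x) = x.
Proof. by apply: ginv_uniq; rewrite gmulVg. Qed.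
Lemma ginvM (x y : G) : inv (x ** y) = inv y ** inv x.
Proof. by apply: ginv_uniq; rewrite -gmulA gVKg gmulgV. Qed.
Lemma ginv1 : inv one = one.
Proof. by apply: ginv_uniq; rewrite gmul1g. Qed.

Lemma sub_one (H : G -> Prop) : is_subgroup H -> H one.
Proof. by case. Qed.
Lemma sub_mul (H : G -> Prop) x y : is_subgroup H -> H x -> H y -> H (x ** y).
Proof. by case=> _ [h _]; apply: h. Qed.
Lemma sub_inv (H : G -> Prop) x : is_subgroup H -> H x -> H (inv x).
Proof. by case=> _ [_ h]; apply: h. Qed.

Lemma fi_mono (H H' : G -> Prop) : finite_index H -> (forall x, H x -> H' x) ->
  finite_index H'.
Proof.
case=> s hs hHH'; exists s => g; have [t [h [ts [hh ->]]]] := hs g.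
by exists t, h; split=> //; split=> //; apply: hHH'.
Qed.

Lemma fi_top : finite_index (fun _ : G => True).
Proof. by exists [:: one] => g; exists one, g; rewrite gmul1g; split=> //; left. Qed.

Lemma fi_rel (H H' : G -> Prop) (S : finType) (sg : G -> S) :
  finite_index H ->
  (forall x y, H x -> H y -> sg x = sg y -> H' (inv x ** y)) -> finite_index H'.
Proof.
case=> s hs hrel.
pose ch (σ : S) := epsilon (inhabits one) (fun u => H u /\ sg u = σ).
pose l := List.map ch (enum S).
exists (List.flat_map (fun t => List.map (fun u => t ** u) l) s) => g.
have [t [h [ts [hh ->]]]] := hs g.
have ex : exists u, H u /\ sg u = sg h by exists h.
have [Hu Su] := epsilon_spec (inhabits one) _ ex.
exists (t ** ch (sg h)), (inv (ch (sg h)) ** h); split; last split.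
- apply/List.in_flat_map; exists t; split=> //.
  apply: List.in_map; rewrite /l; apply: List.in_map; apply/inP; exact: mem_enum.
- by apply: hrel.
- by rewrite -gmulA gVKg.
Qed.

End AG.


Local Notation "x ** y" := (@gmul _ x y) (at level 40, left associativity).

Lemma hom1 (A B : AbsGroup) (f : A -> B) : is_hom f -> f (@gone A) = @gone B.
Proof.
move=> hf; apply: (@gcancl _ (f (@gone A))).
by rewrite -hf !gmulg1.
Qed.

Lemma homV (A B : AbsGroup) (f : A -> B) x : is_hom f -> f (ginv x) = ginv (f x).
Proof.
move=> hf; apply/esym/ginv_uniq; rewrite -hf gmulgV; exact: hom1.
Qed.

Section PHom.
Variables (G : AbsGroup) (gT : finGroupType) (H : G -> Prop) (f : G -> gT).
Hypothesis sH : is_subgroup H.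
Hypothesis hf : forall x y, H x -> H y -> f (x ** y) = (f x * f y)%g.

Lemma phom1 : f (@gone G) = 1%g.
Proof.
have h1 := sub_one sH.
have := hf h1 h1; rewrite gmulg1 => /(congr1 (fun z => (f (@gone G))^-1 * z)%g).
by rewrite mulKg mulVg => ->.
Qed.

Lemma phomV x : H x -> f (ginv x) = (f x)^-1%g.
Proof.
move=> hx; have := hf hx (sub_inv sH hx); rewrite gmulgV phom1 => h.
by rewrite -[f (ginv x)](mulKg (f x)) -h mulg1.
Qed.
End PHom.

Definition inv_in (G : AbsGroup) (gT : finGroupType) (A : {set gT}) :=
  exists H : G -> Prop, is_subgroup H /\ finite_index H /\ exists f : G -> gT,
   [/\ (forall x y, H x -> H y -> f (x ** y) = (f x * f y)%g),
       (forall x, H x -> f x \in A) &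
       (forall z, z \in A -> exists x, H x /\ f x = z)].

Lemma inv_subg (G : AbsGroup) (gT : finGroupType) (A : {group gT}) :
  involves_all_finite G -> inv_in G A.
Proof.
move=> /(_ (subg_of A)) [H [sH [fH [f [hf onto]]]]].
exists H; split=> //; split=> //; exists (fun x => sgval (f x)); split.
- by move=> x y hx hy; rewrite hf.
- by move=> x _; apply: subgP.
- move=> z zA; have [x [hx fx]] := onto (subg A z).
  by exists x; split=> //; rewrite fx subgK.
Qed.

Lemma inv_restrict (G : AbsGroup) (gT : finGroupType) (A B : {group gT}) :
  inv_in G A -> B \subset A -> inv_in G B.
Proof.
move=> [H [sH [fH [f [hf fA onto]]]]] sBA.
exists (fun x => H x /\ f x \in B); split; last split.
- split; first by split; [exact: sub_one | rewrite (phom1 sH hf) group1].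
  split.
  + by move=> x y [hx bx] [hy byy]; split; [exact: sub_mul | rewrite hf // groupM].
  + by move=> x [hx bx]; split; [exact: sub_inv | rewrite (phomV sH hf) // groupV].
- apply: (fi_rel (sg := f) fH) => x y hx hy fxy; split.
    exact: sub_mul (sub_inv sH hx) hy.
  rewrite hf; [|exact: sub_inv sH hx|exact: hy].
  by rewrite (phomV sH hf) // fxy mulVg group1.
- exists f; split.
  + by move=> x y [hx _] [hy _]; apply: hf.
  + by move=> x [].
  + move=> z zB; have [x [hx fx]] := onto z (subsetP sBA z zB).
    by exists x; split; [split=> //; rewrite fx|].
Qed.

Section Embed.
Variables (F gT : finGroupType) (e : F -> gT).
Hypothesis einj : injective e.
Hypothesis eM : forall x y, e (x * y)%g = (e x * e y)%g.

Lemma e_one : e 1%g = 1%g.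
Proof.
have := eM 1 1; rewrite mulg1 => /(congr1 (fun z => (e 1)^-1 * z)%g).
by rewrite mulKg mulVg => ->.
Qed.

Lemma img_group_set : group_set (e @: [set: F]).
Proof.
apply/andP; split; first by apply/imsetP; exists 1%g; rewrite ?inE ?e_one.
apply/subsetP => z /mulsgP [a b /imsetP [x _ ->] /imsetP [y _ ->] ->].
by apply/imsetP; exists (x * y)%g; rewrite ?inE ?eM.
Qed.

Definition img_group := Group img_group_set.

Lemma inv_embed (G : AbsGroup) : inv_in G img_group ->
  exists H : G -> Prop, is_subgroup H /\ finite_index H /\ exists f : G -> F, epi_onto H f.
Proof.
move=> [H [sH [fH [f [hf fA onto]]]]].
pose f' x := odflt 1%g [pick y | e y == f x].
have ef' : forall x, H x -> e (f' x) = f x.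
  move=> x hx; rewrite /f'; case: pickP => [y /eqP //|none].
  by have /imsetP [y _ eq] := fA x hx; have := none y; rewrite eq eqxx.
exists H; split=> //; split=> //; exists f'; split.
- move=> x y hx hy; apply: einj; rewrite eM !ef' ?hf //; exact: sub_mul.
- move=> z; have [x [hx fx]] := onto (e z) (imset_f _ (in_setT z)).
  by exists x; split=> //; apply: einj; rewrite ef'.
Qed.
End Embed.


Lemma Alt_center_triv (T : finType) : 4 < #|T| ->
  forall z, z \in (Alt T) -> (forall y, y \in (Alt T) -> (z * y = y * z)%g) -> z = 1%g.
Proof.
move=> hT z zA hz; have /simpleP [_ simp] := simple_Alt5 hT.
have zZ : z \in 'Z((Alt T)) by apply/centerP; split.
case: (simp _ (center_normal (Alt T))) => hZ.
  by move: zZ; rewrite hZ => /set1P.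
have := center_abelian (Alt T); rewrite hZ => /abelian_sol.
by rewrite solvable_AltF.
Qed.

Section Emb.
Variables F1 F2 : finGroupType.
Definition EX : finType := (F1 * F2 * 'I_3)%type.
Definition ET : finType := (EX + EX)%type.

Lemma s1_inj (g : F1) : injective (fun x : EX => (x.1.1 * g, x.1.2, x.2)%g).
Proof. by move=> [[a b] c] [[a' b'] c'] /= [/mulIg -> -> ->]. Qed.
Lemma s2_inj (g : F2) : injective (fun x : EX => (x.1.1, x.1.2 * g, x.2)%g).
Proof. by move=> [[a b] c] [[a' b'] c'] /= [-> /mulIg -> ->]. Qed.
Definition s1 g : {perm EX} := perm (@s1_inj g).
Definition s2 g : {perm EX} := perm (@s2_inj g).

Definition dblf (s : {perm EX}) (t : ET) : ET :=
  match t with inl x => inl (s x) | inr x => inr (s x) end.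
Lemma dbl_inj s : injective (dblf s).
Proof. by move=> [x|x] [y|y] //= [/perm_inj ->]. Qed.
Definition dbl s : {perm ET} := perm (@dbl_inj s).

Definition Lf (s : {perm EX}) (t : ET) : ET :=
  match t with inl x => inl (s x) | inr x => inr x end.
Lemma L_inj s : injective (Lf s).
Proof. by move=> [x|x] [y|y] //= [/perm_inj ->]. Qed.
Definition Lp s : {perm ET} := perm (@L_inj s).
Definition Rf (s : {perm EX}) (t : ET) : ET :=
  match t with inl x => inl x | inr x => inr (s x) end.
Lemma R_inj s : injective (Rf s).
Proof. by move=> [x|x] [y|y] //= [/perm_inj ->]. Qed.
Definition Rp s : {perm ET} := perm (@R_inj s).
Definition swf (t : ET) : ET := match t with inl x => inr x | inr x => inl x end.
Lemma sw_inj : injective swf.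
Proof. by move=> [x|x] [y|y] //= [->]. Qed.
Definition sw : {perm ET} := perm sw_inj.

Lemma dbl_even s : odd_perm (dbl s) = false.
Proof.
have h1 : dbl s = (Lp s * Rp s)%g by apply/permP => [[x|x]]; rewrite permM !permE.
have h2 : (Lp s * sw = sw * Rp s)%g by apply/permP => [[x|x]]; rewrite !permM !permE.
have h3 : Rp s = (Lp s ^ sw)%g by rewrite /conjg h2 mulKg.
by rewrite h1 odd_permM h3 odd_permJ addbb.
Qed.

Lemma dblM s t : dbl (s * t)%g = (dbl s * dbl t)%g.
Proof. by apply/permP => [[x|x]]; rewrite permM !permE /= permM. Qed.

Definition e1 g := dbl (s1 g).
Definition e2 g := dbl (s2 g).

Lemma e1M x y : e1 (x * y)%g = (e1 x * e1 y)%g.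
Proof.
rewrite /e1 -dblM; congr dbl; apply/permP => z; rewrite permM !permE /=.
by rewrite mulgA.
Qed.
Lemma e2M x y : e2 (x * y)%g = (e2 x * e2 y)%g.
Proof.
rewrite /e2 -dblM; congr dbl; apply/permP => z; rewrite permM !permE /=.
by rewrite mulgA.
Qed.

Lemma e1_inj : injective e1.
Proof.
move=> g h /permP /(_ (inl (1%g, 1%g, ord0))); rewrite !permE /= !permE /=.
by rewrite !mul1g => [[]].
Qed.
Lemma e2_inj : injective e2.
Proof.
move=> g h /permP /(_ (inl (1%g, 1%g, ord0))); rewrite !permE /= !permE /=.
by rewrite !mul1g => [[]].
Qed.

Lemma ET_card : 4 < #|ET|.
Proof.
rewrite card_sum !card_prod card_ord.
have h1 : 0 < #|F1| by apply/card_gt0P; exists 1%g.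
have h2 : 0 < #|F2| by apply/card_gt0P; exists 1%g.
have : 0 < (#|F1| * #|F2|)%N by rewrite muln_gt0 h1 h2.
case: (#|F1| * #|F2|)%N => // n _.
lia.
Qed.

Lemma e1_Alt : img_group e1M \subset (Alt ET).
Proof. by apply/subsetP => z /imsetP [x _ ->]; rewrite Alt_even /e1 dbl_even. Qed.
Lemma e2_Alt : img_group e2M \subset (Alt ET).
Proof. by apply/subsetP => z /imsetP [x _ ->]; rewrite Alt_even /e2 dbl_even. Qed.
End Emb.


Local Notation "x ** y" := (@gmul _ x y) (at level 40, left associativity).

Lemma fi_pre (N G : AbsGroup) (i : N -> G) (H : G -> Prop) :
  is_hom i -> is_subgroup H -> finite_index H -> finite_index (fun n => H (i n)).
Proof.
move=> hi sH [s hs].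
pose ch t := epsilon (inhabits (@gone N)) (fun n => exists h, H h /\ i n = t ** h).
exists (List.map ch s) => n.
have [t [h [ts [hh eq]]]] := hs (i n).
have ex : exists n', exists h, H h /\ i n' = t ** h by exists n, h.
have [h' [hh' eq']] := epsilon_spec (inhabits (@gone N)) _ ex.
exists (ch t), (ginv (ch t) ** n); split; first exact: List.in_map.
split; last by rewrite gVKg.
rewrite hi homV // -/(ch t) eq' eq ginvM -gmulA gKg.
exact: sub_mul (sub_inv sH hh') hh.
Qed.

Lemma part1 (N G Q : AbsGroup) (i : N -> G) (p : G -> Q) :
  short_exact i p ->
  involves_all_finite G -> involves_all_finite N \/ involves_all_finite Q.
Proof.
move=> [hi [hp [iinj [psurj ker]]]] invG.
case: (classic (involves_all_finite N)) => hN; [by left | right].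
have [F1 nF1] := not_all_ex_not _ _ hN.
move=> F2.
have [G0 [sG0 [fG0 [f [hf fA onto]]]]] := inv_subg (Alt_group (ET F1 F2)) invG.
pose K : {set {perm ET F1 F2}} :=
  [set z in Alt (ET F1 F2) | asb (exists n, G0 (i n) /\ f (i n) = z)].
have Kin : forall z, (z \in K) = (z \in Alt (ET F1 F2)) &&
    asb (exists n, G0 (i n) /\ f (i n) = z).
  by move=> z; rewrite /K in_set.
have f1 := phom1 sG0 hf.
have i1 := hom1 hi.
have gK : group_set K.
  apply/andP; split.
    rewrite Kin group1; apply/asbP; exists (@gone N).
    by rewrite i1; split; [exact: sub_one|].
  apply/subsetP => z /mulsgP [a b]; rewrite !Kin.
  move=> /andP [aA /asbP [n [hn fn]]] /andP [bA /asbP [m [hm fm]]] ->.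
  rewrite groupM //; apply/asbP; exists (n ** m); rewrite hi hf //.
  by split; [exact: sub_mul | rewrite fn fm].
pose KG := Group gK.
have nK : KG <| Alt_group (ET F1 F2).
  apply/andP; split.
    by apply/subsetP => z; rewrite Kin => /andP [].
  apply/subsetP => a aA; apply/normP.
  have sub : K :^ a \subset K.
    apply/subsetP => w /imsetP [z]; rewrite Kin => /andP [zA /asbP [n [hn fn]]] ->.
    have [g [hg fg]] := onto a aA.
    have [n' en'] : exists n', i n' = ginv g ** (i n ** g).
      apply/ker; rewrite !hp homV // (proj2 (ker (i n))); last by exists n.
      by rewrite gmul1g gmulVg.
    rewrite Kin groupJ //; apply/asbP; exists n'; rewrite en'.
    have hg' := sub_inv sG0 hg.
    split; first by apply: sub_mul => //; apply: sub_mul.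
    rewrite hf //; last exact: sub_mul.
    by rewrite hf // (phomV sG0 hf) // fn fg.
  by apply/eqP; rewrite eqEcard sub cardJg leqnn.
have [_ simp] := simpleP _ (simple_Alt5 (ET_card F1 F2)).
case: (simp KG nK) => hK.
-
  have key : forall g g', G0 g -> G0 g' -> p g = p g' -> f g = f g'.
    move=> g g' hg hg' pg.
    have hu : G0 (ginv g ** g') := sub_mul sG0 (sub_inv sG0 hg) hg'.
    have [n en] : exists n, i n = ginv g ** g'.
      by apply/ker; rewrite hp homV // pg gmulVg.
    have : f (i n) \in K by rewrite Kin fA ?en //; apply/asbP; exists n; rewrite en.
    rewrite -[K]/(gval KG) hK => /set1P; rewrite en hf //; last exact: sub_inv.
    rewrite (phomV sG0 hf) // => h.
    by rewrite -[f g'](mulKVg (f g)) h mulg1.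
  pose c q := epsilon (inhabits (@gone G)) (fun g => G0 g /\ p g = q).
  have cP : forall q, (exists g, G0 g /\ p g = q) -> G0 (c q) /\ p (c q) = q.
    by move=> q ex; exact: (epsilon_spec (inhabits (@gone G)) (fun g => G0 g /\ p g = q) ex).
  have invQ : inv_in Q (Alt_group (ET F1 F2)).
    exists (fun q => exists g, G0 g /\ p g = q); split; last split.
    + split; first by exists (@gone G); rewrite hom1 //; split=> //; exact: sub_one.
      split.
        move=> x y [g [hg <-]] [g' [hg' <-]]; exists (g ** g').
        by rewrite hp; split=> //; exact: sub_mul.
      by move=> x [g [hg <-]]; exists (ginv g); rewrite homV //; split=> //; exact: sub_inv.
    + case: fG0 => s hs; exists (List.map p s) => q.
      have [g <-] := psurj q; have [t [h [ts [hh ->]]]] := hs g.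
      exists (p t), (p h); split; first exact: List.in_map.
      by rewrite hp; split=> //; exists h.
    + exists (fun q => f (c q)); split.
      * move=> x y hx hy; have [cx px] := cP x hx; have [cy py] := cP y hy.
        have hxy : exists g, G0 g /\ p g = x ** y.
          by exists (c x ** c y); rewrite hp px py; split=> //; exact: sub_mul.
        have [cxy pxy] := cP _ hxy.
        rewrite -hf //; apply: key => //; first exact: sub_mul.
        by rewrite pxy hp px py.
      * by move=> x hx; have [cx _] := cP x hx; exact: fA.
      * move=> z zA; have [x [hx fx]] := onto z zA.
        have ex : exists g, G0 g /\ p g = p x by exists x.
        have [cq pq] := cP _ ex.
        by exists (p x); split=> //; rewrite -fx; apply: key.
  exact: (inv_embed (@e2_inj F1 F2) (inv_restrict invQ (e2_Alt F1 F2))).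
-
  exfalso; apply: nF1.
  have invN : inv_in N (Alt_group (ET F1 F2)).
    exists (fun n => G0 (i n)); split; last split.
    + split; first by rewrite i1; exact: sub_one.
      split.
        by move=> x y hx hy; rewrite hi; exact: sub_mul.
      by move=> x hx; rewrite homV //; exact: sub_inv.
    + exact: fi_pre.
    + exists (fun n => f (i n)); split.
      * by move=> x y hx hy; rewrite hi hf.
      * by move=> x hx; apply: fA.
      * move=> z zA; have : z \in K by rewrite -[K]/(gval KG) hK.
        by rewrite Kin => /andP [_ /asbP [n [hn fn]]]; exists n.
  exact: (inv_embed (@e1_inj F1 F2) (inv_restrict invN (e1_Alt F1 F2))).
Qed.


Local Notation "x ** y" := (@gmul _ x y) (at level 40, left associativity).

Section Act.
Variables (N : AbsGroup) (gT : finGroupType) (N0 : N -> Prop) (f : N -> gT).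
Hypothesis sN0 : is_subgroup N0.
Hypothesis hf : forall x y, N0 x -> N0 y -> f (x ** y) = f x * f y.
Definition Kf (k : N) := N0 k /\ f k = 1.
Variable r : list N.
Hypothesis cover : forall n : N, exists t k, List.In t r /\ Kf k /\ n = t ** k.
Local Notation rt j := (List.nth j r (@gone N)).
Definition Rel (a : N -> N) m j j' := exists k, Kf k /\ a m ** rt j = rt j' ** k.

Lemma sK : is_subgroup Kf.
Proof.
split; first by split; [exact: sub_one | exact: phom1 hf].
split.
  move=> x y [hx fx] [hy fy]; split; first exact: sub_mul.
  by rewrite hf // fx fy mulg1.
by move=> x [hx fx]; split; [exact: sub_inv | rewrite (phomV sN0 hf) // fx invg1].
Qed.

Lemma cover_idx n : exists j k, j < size r /\ Kf k /\ n = rt j ** k.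
Proof.
have [t [k [tr [kk ->]]]] := cover n.
have [j [jl jt]] := List.In_nth _ _ (@gone N) tr.
by exists j, k; split; [apply/ltP | rewrite jt].
Qed.

Lemma Rel_mul a (ha : is_hom a) m m' j j' :
  Rel a (m ** m') j j' <-> exists j'', j'' < size r /\ Rel a m' j j'' /\ Rel a m j'' j'.
Proof.
split.
- move=> [k [kk e]].
  have [j'' [k1 [jl [kk1 e1]]]] := cover_idx (a m' ** rt j).
  exists j''; split=> //; split; first by exists k1.
  exists (k ** ginv k1); split; first exact: sub_mul sK kk (sub_inv sK kk1).
  move: e; rewrite ha -gmulA e1 gmulA => E.
  by rewrite -(ggK (a m ** rt j'') k1) E gmulA.
- move=> [j'' [_ [[k1 [kk1 e1]] [k2 [kk2 e2]]]]].
  exists (k2 ** k1); split; first exact: sub_mul sK kk2 kk1.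
  by rewrite ha -gmulA e1 gmulA e2 gmulA.
Qed.

Lemma Rel_inv a (ha : is_hom a) m j j' : Rel a (ginv m) j j' <-> Rel a m j' j.
Proof.
rewrite /Rel homV //; split.
- move=> [k [kk e]]; exists (ginv k); split; first exact: sub_inv sK kk.
  by rewrite -[rt j](gVKg (a m)) e gmulA ggK.
- move=> [k [kk e]]; exists (ginv k); split; first exact: sub_inv sK kk.
  by rewrite -[rt j](ggK _ k) -e -!gmulA gKg.
Qed.

Lemma same_rel a b (ha : is_hom a) (hb : is_hom b) (s : list N) :
  (forall H : N -> Prop, is_subgroup H -> (forall x, List.In x s -> H x) -> forall g, H g) ->
  (forall x, List.In x s -> forall j j', j < size r -> j' < size r ->
      (Rel a x j j' <-> Rel b x j j')) ->
  forall m j j', j < size r -> j' < size r -> (Rel a m j j' <-> Rel b m j j').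
Proof.
move=> gen hs m.
apply: (gen (fun m => forall j j', j < size r -> j' < size r ->
   (Rel a m j j' <-> Rel b m j j'))); last exact: hs.
split; last split.
- by move=> j j' _ _; rewrite /Rel (hom1 ha) (hom1 hb).
- move=> x y hx hy j j' hj hj'; rewrite !Rel_mul //.
  split=> [[j'' [hj'' [r1 r2]]]|[j'' [hj'' [r1 r2]]]]; exists j''; split=> //.
    by split; [apply/hy | apply/hx].
  by split; [apply/hy | apply/hx].
- by move=> x hx j j' hj hj'; rewrite !Rel_inv //; apply: hx.
Qed.

Lemma same_act a b (ha : is_hom a) (hb : is_hom b) :
  (forall m j j', j < size r -> j' < size r -> (Rel a m j j' <-> Rel b m j j')) ->
  forall m, (N0 (a m) <-> N0 (b m)) /\ (N0 (a m) -> f (a m) = f (b m)).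
Proof.
move=> hrel m.
have [j0 [k0 [hj0 [kk0 e0]]]] := cover_idx (@gone N).
have rK : Kf (rt j0).
  have -> : rt j0 = ginv k0 by rewrite -(ginv_uniq (esym e0)) ginvK.
  exact: sub_inv sK kk0.
have [j [k [hj [kk e]]]] := cover_idx (a m ** rt j0).
have ra : Rel a m j0 j by exists k.
have [k' [kk' e']] := (proj1 (hrel m j0 j hj0 hj)) ra.
have am : a m = rt j ** (k ** ginv (rt j0)) by rewrite gmulA -e ggK.
have bm : b m = rt j ** (k' ** ginv (rt j0)) by rewrite gmulA -e' ggK.
have K1 : Kf (k ** ginv (rt j0)) := sub_mul sK kk (sub_inv sK rK).
have K2 : Kf (k' ** ginv (rt j0)) := sub_mul sK kk' (sub_inv sK rK).
have N0iff : forall t u, Kf u -> (N0 (t ** u) <-> N0 t).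
  move=> t u [hu _]; split=> h; last exact: sub_mul.
  by rewrite -(ggK t u); apply: sub_mul => //; apply: sub_inv.
rewrite am bm !N0iff //; split=> // ht.
by rewrite (hf ht (proj1 K1)) (hf ht (proj1 K2)) (proj2 K1) (proj2 K2).
Qed.
End Act.


Local Notation "x ** y" := (@gmul _ x y) (at level 40, left associativity).

Lemma asb_eq (P R : Prop) : asb P = asb R -> (P <-> R).
Proof. by move=> e; split => h; [move: e; rewrite (introT (asbP P) h) => /esym /asbP
  | move: e; rewrite (introT (asbP R) h) => /asbP]. Qed.

Lemma part2 (N G Q : AbsGroup) (i : N -> G) (p : G -> Q) :
  short_exact i p -> finitely_generated N -> involves_all_finite N -> involves_all_finite G.
Proof.
move=> [hi [hp [iinj [psurj ker]]]] [s gen] invN F.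
have [N0 [sN0 [fN0 [f [hf fA onto]]]]] := inv_subg (Alt_group (ET F F)) invN.
have fK : finite_index (Kf N0 f).
  apply: (fi_rel (sg := f) fN0) => x y hx hy fxy; split.
    exact: sub_mul sN0 (sub_inv sN0 hx) hy.
  rewrite hf //; last exact: sub_inv.
  by rewrite (phomV sN0 hf) // fxy mulVg.
case: fK => r cover.
have cex : forall g n, exists m, i m = ginv g ** (i n ** g).
  move=> g n; apply/ker; rewrite !hp homV // (proj2 (ker (i n))); last by exists n.
  by rewrite gmul1g gmulVg.
pose c g n := epsilon (inhabits (@gone N)) (fun m => i m = ginv g ** (i n ** g)).
have cP : forall g n, i (c g n) = ginv g ** (i n ** g).
  move=> g n.
  exact: (epsilon_spec (inhabits (@gone N)) (fun m => i m = ginv g ** (i n ** g)) (cex g n)).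
have chom : forall g, is_hom (c g).
  by move=> g x y; apply: iinj; rewrite hi !cP hi !gmulA ggK.
have ccomp : forall g h n, c (g ** h) n = c h (c g n).
  by move=> g h n; apply: iinj; rewrite !cP ginvM !gmulA.
have c1 : forall n, c (@gone G) n = n.
  by move=> n; apply: iinj; rewrite cP ginv1 gmul1g gmulg1.
have cV : forall g n, c g (c (ginv g) n) = n.
  by move=> g n; rewrite -ccomp gmulVg c1.
have ci : forall u m, c (i u) m = ginv u ** (m ** u).
  by move=> u m; apply: iinj; rewrite cP !hi homV.
pose G2 g := forall n, (N0 n <-> N0 (c g n)) /\ (N0 n -> f (c g n) = f n).
have sG2 : is_subgroup G2.
  split; first by move=> n; rewrite c1.
  split.
    move=> g h hg hh n; rewrite ccomp; have [a1 a2] := hg n.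
    have [b1 b2] := hh (c g n); split; first by rewrite a1.
    by move=> hn; rewrite b2 ?a2 //; rewrite -a1.
  move=> g hg n; have [a1 a2] := hg (c (ginv g) n); rewrite cV in a1 a2.
  split; first by split=> h; apply/a1.
  by move=> hn; rewrite -a2 //; apply/a1.
pose l := size r; pose kk := size s.
pose sig g : {ffun 'I_l * 'I_l * 'I_kk -> bool} :=
  [ffun x : ('I_l * 'I_l * 'I_kk)%type =>
     asb (Rel N0 f r (c g) (List.nth (nat_of_ord x.2) s (@gone N))
          (nat_of_ord x.1.1) (nat_of_ord x.1.2))].
have fG2 : finite_index G2.
  apply: (fi_rel (sg := sig) (@fi_top G)) => x y _ _ sxy n.
  have hs : forall z, List.In z s -> forall j j', j < size r -> j' < size r ->
      (Rel N0 f r (c x) z j j' <-> Rel N0 f r (c y) z j j').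
    move=> z zs j j' hj hj'.
    have [k [hk <-]] := List.In_nth _ _ (@gone N) zs.
    have hk' : k < kk by apply/ltP.
    have := congr1 (fun F : {ffun 'I_l * 'I_l * 'I_kk -> bool} =>
       F (@Ordinal l j hj, @Ordinal l j' hj', Ordinal hk')) sxy.
    by rewrite !ffunE /=; apply: asb_eq.
  have hrel := same_rel sN0 hf cover (chom x) (chom y) gen hs.
  have [e1 e2] := same_act sN0 hf cover (chom x) (chom y) hrel (c (ginv x) n).
  rewrite ccomp; split; first by rewrite -e1 cV.
  move=> hn; have hx : N0 (c x (c (ginv x) n)) by rewrite cV.
  by rewrite -(e2 hx) cV.
have cent : forall u, N0 u -> G2 (i u) -> f u = 1.
  move=> u hu gu; apply: (Alt_center_triv (ET_card F F)); first exact: fA.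
  move=> z zA; have [m [hm <-]] := onto z zA.
  have [_ h] := gu m; move: (h hm); rewrite ci.
  rewrite hf; [|exact: sub_inv|exact: sub_mul].
  rewrite hf // (phomV sN0 hf) // => {}h.
  by rewrite -{1}h mulKVg.
have wd : forall g n g' n', G2 g -> N0 n -> G2 g' -> N0 n' ->
    g ** i n = g' ** i n' -> f n = f n'.
  move=> g n g' n' hg hn hg' hn' e.
  have eu : ginv g' ** g = i (n' ** ginv n).
    by rewrite hi homV // -(ggK g (i n)) e -gmulA gKg.
  have hu : N0 (n' ** ginv n) by apply: sub_mul => //; exact: sub_inv.
  have gu : G2 (i (n' ** ginv n)) by rewrite -eu; exact: (sub_mul sG2 (sub_inv sG2 hg') hg).
  have fu := cent _ hu gu.
  by rewrite -(ggVK n' n) hf // fu mul1g.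
pose H x := exists g n, G2 g /\ N0 n /\ x = g ** i n.
pose ch x := epsilon (inhabits (@gone G, @gone N))
   (fun gn : G * N => G2 gn.1 /\ N0 gn.2 /\ x = gn.1 ** i gn.2).
have chP : forall x g n, G2 g -> N0 n -> x = g ** i n -> f (ch x).2 = f n.
  move=> x g n hg hn e.
  have ex : exists gn : G * N, G2 gn.1 /\ N0 gn.2 /\ x = gn.1 ** i gn.2.
    by exists (g, n).
  have [h1 [h2 h3]] := epsilon_spec (inhabits (@gone G, @gone N)) _ ex.
  by apply: (wd _ _ _ _ h1 h2 hg hn); rewrite -h3.
have prodE : forall g n g' n', g ** i n ** (g' ** i n') = (g ** g') ** i (c g' n ** n').
  by move=> g n g' n'; rewrite hi cP !gmulA ggK.
have invQ : inv_in G (Alt_group (ET F F)).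
  exists H; split; last split.
  - split.
      exists (@gone G), (@gone N); rewrite hom1 // gmulg1.
      by split; [exact: (sub_one sG2) | split; [exact: (sub_one sN0) | by []]].
    split.
      move=> x y [g [n [hg [hn ->]]]] [g' [n' [hg' [hn' ->]]]].
      exists (g ** g'), (c g' n ** n'); split; first exact: (sub_mul sG2 hg hg').
      split; last exact: prodE.
      by apply: sub_mul => //; apply/(proj1 (hg' n)).
    move=> x [g [n [hg [hn ->]]]].
    exists (ginv g), (c (ginv g) (ginv n)); split; first exact: (sub_inv sG2 hg).
    split; first by apply/(proj1 (sub_inv sG2 hg (ginv n))); exact: sub_inv.
    by rewrite cP (homV _ hi) ginvK ginvM !gmulA gmulVg gmul1g.
  - apply: (fi_mono fG2) => g hg; exists g, (@gone N).
    by rewrite hom1 // gmulg1; split=> //; split=> //; exact: sub_one.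
  - exists (fun x => f (ch x).2); split.
    + move=> x y [g [n [hg [hn ex]]]] [g' [n' [hg' [hn' ey]]]].
      have hc : N0 (c g' n) by apply/(proj1 (hg' n)).
      rewrite (chP x g n) // (chP y g' n') // (chP _ (g ** g') (c g' n ** n')).
      * by rewrite hf // (proj2 (hg' n)).
      * exact: (sub_mul sG2 hg hg').
      * exact: (sub_mul sN0 hc hn').
      * by rewrite ex ey prodE.
    + move=> x [g [n [hg [hn ex]]]]; rewrite (chP x g n) //; exact: fA.
    + move=> z zA; have [m [hm <-]] := onto z zA.
      exists (@gone G ** i m); split; first by exists (@gone G), m; split=> //; exact: (sub_one sG2).
      by rewrite (chP _ (@gone G) m) //; exact: (sub_one sG2).
exact: (inv_embed (@e1_inj F F) (inv_restrict invQ (e1_Alt F F))).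
Qed.


Theorem lemma1p5 (N G Q : AbsGroup) (i : N -> G) (p : G -> Q) :
  short_exact i p ->
  (involves_all_finite G -> involves_all_finite N \/ involves_all_finite Q) /\
  (finitely_generated N -> involves_all_finite N -> involves_all_finite G).
Proof.
move=> hs; split; [exact: part1 hs | exact: part2 hs].
Qed.
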